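(* Consider the finite-data game $\mathcal{G}_N$ described in the context. Every truth-leaning equilibrium messaging strategy $\sigma^*$ of $\mathcal{G}_N$ is a best response to the beliefs $q_{\sigma^*}$, and it satisfies: (a) every on-path message lies in $\mathcal{T}_N$; (b) for every type $t$, if $\mathbb{E}_{\pi(\cdot|t)}[\theta] < \max_{m\subseteq t}\mathbb{E}_{\beta_{\sigma^*}(\cdot|m)}[\theta]$, then the message $m=t$ is off-path; (c) for every type $t$, if $\mathbb{E}_{\pi(\cdot|t)}[\theta] > \max_{m\subseteq t}\mathbb{E}_{\beta_{\sigma^*}(\cdot|m)}[\theta]$, then $\sigma^*(t\mid t)=1$. Furthermore, there always exists an equilibrium $(\sigma^*,\beta_{\sigma^*})$ in which $\sigma^*$ is a best response to $q_{\sigma^*}$ and (a)–(c) hold, and every such equilibrium has the same outcome $u^*(t)=\max_{m\subseteq t}\mathbb{E}_{\beta_{\sigma^*}(\cdot|m)}[\theta]$, which coincides with the (unique) truth-leaning equilibrium outcome.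
   Context: Finite-data game $\mathcal{G}_N$. States $\Theta=\{\theta_1,\dots,\theta_J\}\subset\mathbb{R}$ with $\theta_1\le\cdots\le\theta_J$ and common prior $\beta_0$ on $\Theta$. A finite outcome set $\mathcal{D}=\{1,\dots,D\}$; for each $j$, $f_j$ is a probability distribution on $\mathcal{D}$. Nature draws $\theta\sim\beta_0$, then a number $n\in\{0,\dots,N\}$ from a pmf $g_N$ (with cdf $G_N$) whose support contains $N$, then $n$ i.i.d. draws from $f_\theta$. The sender's type is the dataset $t=\frac1N(t_1,\dots,t_D)$, $t_d$ the number of draws equal to $d$; $\mathcal{T}_N$ is the set of such datasets, with probability $q(t)=\frac{n(t)!}{\prod_d t_d!}g_N(n(t))\sum_{j'}\beta_0(\theta_{j'})\prod_d f_{j'}(d)^{t_d}$, $n(t)=\sum_d t_d$. The sender's posterior is $\pi(\theta_j|t)=\beta_0(\theta_j)\prod_d f_j(d)^{t_d}/\sum_{j'}\beta_0(\theta_{j'})\prod_d f_{j'}(d)^{t_d}$. The message space $\mathcal{M}_N$ consists of all vectors $\frac1N(m_1,\dots,m_D)$ of nonnegative integers with $\sum_d m_d\le N$ (so $\mathcal{T}_N\subseteq\mathcal{M}_N$); type $t$ may send $m$ iff $m\subseteq t$, meaning $m_d\le t_d$ for all $d$. A messaging strategy is $\sigma:\mathcal{T}_N\to\Delta\mathcal{M}_N$ supported on feasible messages. After message $m$ the receiver holds a belief $q(\cdot|m)$ over types, hence state belief $\beta(\theta_j|m)=\sum_t q(t|m)\pi(\theta_j|t)$, and takes action $\mathbb{E}_{\beta(\cdot|m)}[\theta]$,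 which is every sender type's payoff. Equilibrium means perfect Bayesian equilibrium. Given $\sigma$, the beliefs $q_\sigma(\cdot|m)$ are: Bayes' rule for on-path $m$; the point mass on type $t=m$ for off-path $m\in\mathcal{T}_N$; and for off-path $m\in\mathcal{M}_N\setminus\mathcal{T}_N$, the belief $q_\sigma(\cdot|t')$ at a dataset $t'\in\mathcal{T}_N$, $t'\supseteq m$, minimizing the induced receiver expectation of $\theta$. $\beta_\sigma(\cdot|m)$ is the state belief induced by $q_\sigma(\cdot|m)$. The outcome of an equilibrium is $u^*(t)=\max_{m\subseteq t}\mathbb{E}_{\beta_\sigma(\cdot|m)}[\theta]$. Truth-leaning: for $\epsilon=(\epsilon_t,\epsilon_{t|t})_{t\in\mathcal{T}_N}$ with positive entries, the perturbed game $\mathcal{G}_\epsilon$ is identical except that type $t$'s payoff from sending exactly $m=t$ is increased by $\epsilon_t$, and type $t$ sends $t$ with probability at least $\epsilon_{t|t}$ (it is a commitment type with that probability). A strategy $\sigma^*$ is a truth-leaning equilibrium strategy of $\mathcal{G}_N$ if it is the limit of PBE strategies $\sigma^k$ of games $\mathcal{G}_{\epsilon^k}$ with $\epsilon^k\to0$. *)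

(* Defs.v *)
From mathcomp Require Import all_boot all_order all_algebra.
Set Implicit Arguments. Unset Strict Implicit. Unset Printing Implicit Defensive.
Import Order.TTheory GRing.Theory Num.Theory.
Local Open Scope ring_scope.

Section Game.
(* J states theta_1 <= ... <= theta_J, prior b0, D outcomes, signal
   distributions f j, sample-size pmf g on {0,...,N}. *)
Variables (R : realFieldType) (J D N : nat).
Variables (theta b0 : 'I_J -> R) (f : 'I_J -> 'I_D -> R) (g : nat -> R).

(* A vector of counts (m_1,...,m_D) with entries <= N.  The paper's
   dataset/message is (1/N) times this vector; we use the counts. *)
Definition Msg := {ffun 'I_D -> 'I_N.+1}.

Definition size_of (m : Msg) : nat := (\sum_(d < D) (m d : nat))%N.
Definition inM (m : Msg) : bool := (size_of m <= N)%N.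
Definition subm (m t : Msg) : bool := [forall d, (m d <= t d)%N].

Definition lik (j : 'I_J) (t : Msg) : R := \prod_(d < D) f j d ^+ (t d).
Definition marg (t : Msg) : R := \sum_(j < J) b0 j * lik j t.
Definition multinom (t : Msg) : R :=
  (size_of t)`!%:R / (\prod_(d < D) (t d)`!)%N%:R.
Definition qprob (t : Msg) : R := multinom t * g (size_of t) * marg t.
Definition inT (t : Msg) : bool := inM t && (0 < qprob t).
Definition post (t : Msg) (j : 'I_J) : R := b0 j * lik j t / marg t.
Definition post_exp (t : Msg) : R := \sum_(j < J) post t j * theta j.

(* messaging strategies: s t m = probability that type t sends m *)
Definition is_strategy (s : Msg -> Msg -> R) : Prop :=
  forall t, inT t ->
    [/\ forall m, 0 <= s t m, \sum_m s t m = 1 &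
        forall m, 0 < s t m -> subm m t].

Definition mass (s : Msg -> Msg -> R) (m : Msg) : R :=
  \sum_(t | inT t) qprob t * s t m.
Definition onpath (s : Msg -> Msg -> R) (m : Msg) : bool := 0 < mass s m.
Definition bayes (s : Msg -> Msg -> R) (m t : Msg) : R :=
  qprob t * s t m / mass s m.

(* receiver beliefs over types: mu m t = q(t | m) *)
Definition is_belief (mu : Msg -> Msg -> R) : Prop :=
  forall m, (forall t, inT t -> 0 <= mu m t) /\ \sum_(t | inT t) mu m t = 1.
Definition state_bel (mu : Msg -> Msg -> R) (m : Msg) (j : 'I_J) : R :=
  \sum_(t | inT t) mu m t * post t j.
(* receiver action E_{beta(.|m)}[theta] = every type's payoff *)
Definition act (mu : Msg -> Msg -> R) (m : Msg) : R :=
  \sum_(j < J) state_bel mu m j * theta j.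

Definition qbel0 (s : Msg -> Msg -> R) (m t : Msg) : R :=
  if onpath s m then bayes s m t else (t == m)%:R.
Definition cand (m t' : Msg) : bool := inT t' && subm m t'.
Definition qsig (s : Msg -> Msg -> R) (m : Msg) : Msg -> R :=
  if onpath s m || inT m then qbel0 s m
  else match [pick t' | cand m t' &&
                [forall t'', cand m t'' ==> (act (qbel0 s) t' <= act (qbel0 s) t'')]]
       with Some t' => qbel0 s t' | None => qbel0 s m end.
Definition beta_sig (s : Msg -> Msg -> R) (m : Msg) (j : 'I_J) : R :=
  state_bel (qsig s) m j.
Definition act_sig (s : Msg -> Msg -> R) (m : Msg) : R := act (qsig s) m.

Definition best_response_to (mu : Msg -> Msg -> R) (s : Msg -> Msg -> R) : Prop :=
  forall t, inT t -> forall m, 0 < s t m ->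
    forall m', subm m' t -> act mu m' <= act mu m.

Definition ustar (s : Msg -> Msg -> R) (t : Msg) : R :=
  \big[Order.max/act_sig s t]_(m | subm m t) act_sig s m.

(* PBE strategies of the perturbed game G_eps: with probability epsc t
   type t is a commitment type sending t; otherwise it plays rho t,
   a best response to payoff E[theta|mu m] + eps t [m = t]. *)
Definition pbe_perturbed (eps epsc : Msg -> R) (s : Msg -> Msg -> R) : Prop :=
  (forall t, inT t -> epsc t <= 1) /\
  exists (rho mu : Msg -> Msg -> R),
   [/\ is_strategy rho, is_belief mu,
     (forall t, inT t -> forall m,
         s t m = epsc t * (m == t)%:R + (1 - epsc t) * rho t m),
     (forall m, onpath s m -> forall t, inT t -> mu m t = bayes s m t) &
     (forall t, inT t -> forall m, 0 < rho t m -> forall m', subm m' t ->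
         act mu m' + eps t * (m' == t)%:R <= act mu m + eps t * (m == t)%:R)].

Definition cvg_to (u : nat -> R) (l : R) : Prop :=
  forall e, 0 < e -> exists K, forall k, (K <= k)%N -> `|u k - l| < e.

Definition truth_leaning (s : Msg -> Msg -> R) : Prop :=
  exists (eps epsc : nat -> Msg -> R) (sk : nat -> Msg -> Msg -> R),
   [/\ forall k t, inT t -> 0 < eps k t /\ 0 < epsc k t,
       forall t, inT t -> cvg_to (fun k => eps k t) 0 /\ cvg_to (fun k => epsc k t) 0,
       forall k, pbe_perturbed (eps k) (epsc k) (sk k) &
       forall t, inT t -> forall m, cvg_to (fun k => sk k t m) (s t m)].

Definition prop_a (s : Msg -> Msg -> R) : Prop := forall m, onpath s m -> inT m.
Definition prop_b (s : Msg -> Msg -> R) : Prop :=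
  forall t, inT t -> post_exp t < ustar s t -> ~~ onpath s t.
Definition prop_c (s : Msg -> Msg -> R) : Prop :=
  forall t, inT t -> ustar s t < post_exp t -> s t t = 1.

Definition abc_equilibrium (s : Msg -> Msg -> R) : Prop :=
  [/\ is_strategy s, best_response_to (qsig s) s, prop_a s, prop_b s & prop_c s].

End Game.

(* Main.v *)
Require Import Defs.
From mathcomp Require Import all_boot all_order all_algebra.
From mathcomp Require Import ring lra.
Import Order.TTheory GRing.Theory Num.Theory.
Set Implicit Arguments. Unset Strict Implicit. Unset Printing Implicit Defensive.
Local Open Scope ring_scope.
Section Cvg.
Variable R : realFieldType.

Definition ev (P : nat -> Prop) := exists K, forall k, (K <= k)%N -> P k.

Lemma ev_and (P Q : nat -> Prop) : ev P -> ev Q -> ev (fun k => P k /\ Q k).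
Proof.
move=> [K1 H1] [K2 H2]; exists (maxn K1 K2) => k hk; split.
- by apply: H1; apply: leq_trans hk; rewrite leq_maxl.
- by apply: H2; apply: leq_trans hk; rewrite leq_maxr.
Qed.

Lemma ev_mono (P Q : nat -> Prop) : (forall k, P k -> Q k) -> ev P -> ev Q.
Proof. by move=> h [K HK]; exists K => k /HK /h. Qed.

Lemma ev_true (P : nat -> Prop) : (forall k, P k) -> ev P.
Proof. by move=> h; exists 0%N. Qed.

Lemma cvg_eq (u w : nat -> R) a : (forall k, u k = w k) -> cvg_to u a -> cvg_to w a.
Proof. by move=> h H e he; have [K HK] := H e he; exists K => k hk; rewrite -h; apply: HK. Qed.

Lemma cvg_cst (c : R) : cvg_to (fun _ => c) c.
Proof. by move=> e he; exists 0%N => k _; rewrite subrr normr0. Qed.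

Lemma cvg_add (u w : nat -> R) a b : cvg_to u a -> cvg_to w b ->
  cvg_to (fun k => u k + w k) (a + b).
Proof.
move=> Hu Hw e he.
have he2 : 0 < e / 2 by rewrite divr_gt0.
have [K HK] := ev_and (Hu _ he2) (Hw _ he2).
exists K => k /HK [h1 h2].
rewrite (_ : u k + w k - (a + b) = (u k - a) + (w k - b)); last by ring.
apply: le_lt_trans (ler_normD _ _) _.
rewrite [e](splitr e); exact: ltrD.
Qed.

Lemma cvg_scale (c : R) (u : nat -> R) a : cvg_to u a -> cvg_to (fun k => c * u k) (c * a).
Proof.
move=> Hu e he.
have hc : 0 < `|c| + 1 by rewrite ltr_wpDl.
have [K HK] := Hu (e / (`|c| + 1)) (divr_gt0 he hc).
exists K => k /HK h.
rewrite -mulrBr normrM.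
have h1 : `|c| * `|u k - a| <= (`|c| + 1) * `|u k - a|.
  by rewrite ler_wpM2r // lerDl.
apply: le_lt_trans h1 _.
by rewrite mulrC -ltr_pdivlMr.
Qed.

Lemma cvg_opp (u : nat -> R) a : cvg_to u a -> cvg_to (fun k => - u k) (- a).
Proof.
move=> H; apply: (cvg_eq (u := fun k => (-1) * u k)); first by move=> k; rewrite mulN1r.
by rewrite -(mulN1r a); apply: cvg_scale.
Qed.

Lemma cvg_sub (u w : nat -> R) a b : cvg_to u a -> cvg_to w b ->
  cvg_to (fun k => u k - w k) (a - b).
Proof. by move=> Hu Hw; apply: cvg_add => //; apply: cvg_opp. Qed.

Lemma cvg_sum_seq (I : Type) (r : seq I) (P : pred I) (F : nat -> I -> R) (L : I -> R) :
  (forall i, P i -> cvg_to (fun k => F k i) (L i)) ->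
  cvg_to (fun k => \sum_(i <- r | P i) F k i) (\sum_(i <- r | P i) L i).
Proof.
move=> H; elim: r => [|a r IH].
  by rewrite big_nil; apply: (cvg_eq (u := fun _ => 0)) => [k|]; rewrite ?big_nil //; apply: cvg_cst.
rewrite big_cons; case: ifP => Pa.
  apply: (cvg_eq (u := fun k => F k a + \sum_(i <- r | P i) F k i)).
    by move=> k; rewrite big_cons Pa.
  by apply: cvg_add => //; apply: H.
by apply: (cvg_eq _ IH) => k; rewrite big_cons Pa.
Qed.

Lemma cvg_gt (u : nat -> R) a c : cvg_to u a -> c < a -> ev (fun k => c < u k).
Proof.
move=> H hc; have [K HK] : exists K, forall k, (K <= k)%N -> `|u k - a| < a - c.
  by apply: H; rewrite subr_gt0.
exists K => k /HK h.
have := ler_norm (a - u k); rewrite distrC => h2.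
have := le_lt_trans h2 h; lra.
Qed.

Lemma cvg_lt (u : nat -> R) a c : cvg_to u a -> a < c -> ev (fun k => u k < c).
Proof.
move=> H hc; have [K HK] : exists K, forall k, (K <= k)%N -> `|u k - a| < c - a.
  by apply: H; rewrite subr_gt0.
exists K => k /HK h.
have := ler_norm (u k - a) => h2.
have := le_lt_trans h2 h; lra.
Qed.

Lemma cvg_le (u w : nat -> R) a b : cvg_to u a -> cvg_to w b ->
  ev (fun k => u k <= w k) -> a <= b.
Proof.
move=> Hu Hw Hle; rewrite leNgt; apply/negP => hba.
have hm : b < (a + b) / 2 by lra.
have hm2 : (a + b) / 2 < a by lra.
have [K HK] := ev_and Hle (ev_and (cvg_gt Hu hm2) (cvg_lt Hw hm)).
have [h1 [h2 h3]] := HK K (leqnn K).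
lra.
Qed.

Lemma cvg_div (u w : nat -> R) a b : cvg_to u a -> cvg_to w b -> 0 < b ->
  cvg_to (fun k => u k / w k) (a / b).
Proof.
move=> Hu Hw hb.
(* u k / w k - a / b = (u k - (a/b) * w k) / w k *)
have Hz : cvg_to (fun k => u k - (a / b) * w k) 0.
  have -> : (0 : R) = a - (a / b) * b by rewrite mulfVK ?subrr // gt_eqF.
  by apply: cvg_sub => //; apply: cvg_scale.
move=> e he.
have hb2 : 0 < b / 2 by rewrite divr_gt0.
have hlt : b / 2 < b by lra.
have [K HK] := ev_and (cvg_gt Hw hlt) (Hz (e * (b / 2)) (mulr_gt0 he hb2)).
exists K => k /HK [h1 h2].
have hwk : 0 < w k by lra.
have -> : u k / w k - a / b = (u k - a / b * w k) / w k.
  by field; rewrite ?gt_eqF.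
rewrite normrM normfV (gtr0_norm hwk) ltr_pdivrMr //.
rewrite subr0 in h2.
apply: lt_le_trans h2 _.
by rewrite ler_wpM2l ?ltW.
Qed.

End Cvg.
Section Transport.
Variable R : realFieldType.
Variables (X Y : finType) (e : X -> Y -> bool).

Lemma sumS (Z : finType) (A : {set Z}) (F : Z -> R) :
  \sum_(x in A) F x = \sum_x (if x \in A then F x else 0).
Proof. by rewrite big_mkcond. Qed.

Lemma sum_sub (Z : finType) (A B : {set Z}) (F : Z -> R) :
  (forall x, x \in A -> x \in B) -> (forall x, 0 <= F x) ->
  \sum_(x in A) F x <= \sum_(x in B) F x.
Proof.
move=> hAB hF; rewrite !sumS; apply: ler_sum => x _.
case: ifP => hA; first by rewrite hAB.
by case: ifP.
Qed.

Definition Nb (A : {set X}) : {set Y} := [set y | [exists x in A, e x y]].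

Definition good (a : X -> R) (b : Y -> R) :=
  [/\ forall x, 0 <= a x, forall y, 0 <= b y, \sum_x a x = \sum_y b y &
      forall A : {set X}, \sum_(x in A) a x <= \sum_(y in Nb A) b y].

Definition solv (a : X -> R) (b : Y -> R) :=
  exists F : X -> Y -> R, [/\ forall x y, 0 <= F x y, forall x y, 0 < F x y -> e x y,
     forall x, \sum_y F x y = a x & forall y, \sum_x F x y = b y].

Definition msr (a : X -> R) (b : Y -> R) :=
  (#|[set x | a x != 0%R]| + #|[set y | b y != 0%R]|)%N.

Lemma zero_solv a b : (forall x, a x = 0) -> good a b -> solv a b.
Proof.
move=> ha [_ hb htot _].
have hb0 : forall y, b y = 0.
  move=> y; have : \sum_y b y = 0 by rewrite -htot big1.
  by move/psumr_eq0P => /(_ (fun i _ => hb i)) /(_ y isT).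
exists (fun _ _ => 0); split => //.
- by move=> x y; rewrite ltxx.
- by move=> x; rewrite big1 // ha.
- by move=> y; rewrite big1 // hb0.
Qed.

Lemma solv_add a1 b1 a2 b2 : solv a1 b1 -> solv a2 b2 ->
  solv (fun x => a1 x + a2 x) (fun y => b1 y + b2 y).
Proof.
move=> [F1 [h1 h2 h3 h4]] [F2 [k1 k2 k3 k4]].
exists (fun x y => F1 x y + F2 x y); split.
- by move=> x y; apply: addr_ge0.
- move=> x y hp; case: (ltrP 0 (F1 x y)) => [/h2 //|hle].
  apply: k2; have := h1 x y; lra.
- by move=> x; rewrite big_split /= h3 k3.
- by move=> y; rewrite big_split /= h4 k4.
Qed.

Lemma solv_ext a b a' b' : (forall x, a x = a' x) -> (forall y, b y = b' y) ->
  solv a b -> solv a' b'.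
Proof.
move=> ha hb [F [h1 h2 h3 h4]]; exists F; split => // [x|y]; by rewrite ?h3 ?h4.
Qed.

Lemma supp_lt (Z : finType) (a a' : Z -> R) :
  (forall x, a' x != 0 -> a x != 0) -> (exists x, a x != 0 /\ a' x = 0) ->
  (#|[set x | a' x != 0%R]| < #|[set x | a x != 0%R]|)%N.
Proof.
move=> hsub [x0 [h0 h0']]; apply: proper_card; apply/properP; split.
  by apply/subsetP => x; rewrite !inE => /hsub.
by exists x0; rewrite !inE ?h0 ?h0' ?eqxx.
Qed.

Lemma supp_le (Z : finType) (b b' : Z -> R) :
  (forall y, b' y != 0 -> b y != 0) ->
  (#|[set y | b' y != 0%R]| <= #|[set y | b y != 0%R]|)%N.
Proof.
move=> hsub; apply: subset_leq_card; apply/subsetP => y; rewrite !inE; exact: hsub.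
Qed.

Lemma split_solv n a b (A : {set X}) :
  (forall a' b', (msr a' b' <= n)%N -> good a' b' -> solv a' b') ->
  (msr a b <= n.+1)%N -> good a b ->
  \sum_(x in A) a x = \sum_(y in Nb A) b y ->
  (exists x, x \in A /\ a x != 0) -> (exists x, x \notin A /\ a x != 0) ->
  solv a b.
Proof.
move=> IH hm [ha hb htot hhall] htight [x1 [hx1 hx1']] [x2 [hx2 hx2']].
pose a1 x := if x \in A then a x else 0.
pose b1 y := if y \in Nb A then b y else 0.
pose a2 x := if x \in A then 0 else a x.
pose b2 y := if y \in Nb A then 0 else b y.
have ha1 : forall x, 0 <= a1 x by move=> x; rewrite /a1; case: ifP.
have hb1 : forall y, 0 <= b1 y by move=> y; rewrite /b1; case: ifP.
have ha2 : forall x, 0 <= a2 x by move=> x; rewrite /a2; case: ifP.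
have hb2 : forall y, 0 <= b2 y by move=> y; rewrite /b2; case: ifP.
have hsa1 : \sum_x a1 x = \sum_(x in A) a x by rewrite sumS.
have hsb1 : \sum_y b1 y = \sum_(y in Nb A) b y by rewrite sumS.
have hsa2 : \sum_x a2 x = \sum_x a x - \sum_(x in A) a x.
  rewrite sumS -sumrB; apply: eq_bigr => x _; rewrite /a2; case: ifP => _; ring.
have hsb2 : \sum_y b2 y = \sum_y b y - \sum_(y in Nb A) b y.
  rewrite sumS -sumrB; apply: eq_bigr => y _; rewrite /b2; case: ifP => _; ring.
have S1 : solv a1 b1.
  apply: IH; last first.
    split => //; first by rewrite hsa1 hsb1.
    move=> B.
    have -> : \sum_(x in B) a1 x = \sum_(x in B :&: A) a x.
      by rewrite !sumS; apply: eq_bigr => x _; rewrite /a1 inE; case: (x \in B); case: (x \in A).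
    apply: le_trans (hhall _) _.
    rewrite !sumS; apply: ler_sum => y _; rewrite /b1.
    case: ifP => hy; last by case: ifP => _ //; case: ifP.
    move: hy; rewrite inE => /existsP [x /andP[]]; rewrite inE => /andP[hxB hxA] hexy.
    have -> : y \in Nb B by rewrite inE; apply/existsP; exists x; rewrite hxB.
    by have -> : y \in Nb A by rewrite inE; apply/existsP; exists x; rewrite hxA.
  rewrite -ltnS; apply: leq_trans hm; rewrite /msr -addSn leq_add //.
    apply: supp_lt; first by move=> x; rewrite /a1; case: ifP => // _; rewrite eqxx.
    by exists x2; rewrite /a1 (negbTE hx2).
  by apply: supp_le => y; rewrite /b1; case: ifP => //; rewrite eqxx.
have S2 : solv a2 b2.
  apply: IH; last first.
    split => //; first by rewrite hsa2 hsb2 htot htight.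
    move=> B.
    have hB : \sum_(x in B) a2 x + \sum_(x in A) a x = \sum_(x in (B :\: A) :|: A) a x.
      rewrite !sumS -big_split /=; apply: eq_bigr => x _; rewrite /a2 !inE.
      by case: (x \in A); case: (x \in B); rewrite ?addr0 ?add0r.
    have hB2 := hhall ((B :\: A) :|: A).
    have hNb : \sum_(y in Nb ((B :\: A) :|: A)) b y <=
               \sum_(y in Nb B) b2 y + \sum_(y in Nb A) b y.
      rewrite !sumS -big_split /=; apply: ler_sum => y _; rewrite /b2.
      case: ifP => hy; last by case: ifP; case: ifP => //; rewrite ?addr0 ?add0r ?lexx // => *; apply: addr_ge0.
      move: hy; rewrite inE => /existsP [x /andP[]]; rewrite !inE => /orP[/andP[hxA hxB]|hxA] hexy.
        have -> : [exists x in B, e x y] by apply/existsP; exists x; rewrite hxB.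
        case: ifP => _; first by rewrite add0r.
        by rewrite addr0.
      have -> : [exists x in A, e x y] by apply/existsP; exists x; rewrite hxA.
      by case: ifP => _; rewrite add0r.
    have := le_trans hB2 hNb; rewrite -hB htight; lra.
  rewrite -ltnS; apply: leq_trans hm; rewrite /msr -addSn leq_add //.
    apply: supp_lt; first by move=> x; rewrite /a2; case: ifP => // _; rewrite eqxx.
    by exists x1; rewrite /a2 hx1.
  by apply: supp_le => y; rewrite /b2; case: ifP => //; rewrite eqxx.
apply: solv_ext (solv_add S1 S2).
  by move=> x; rewrite /a1 /a2; case: ifP => _; rewrite ?addr0 ?add0r.
by move=> y; rewrite /b1 /b2; case: ifP => _; rewrite ?addr0 ?add0r.
Qed.


Lemma nR0 : (false%:R : R) = 0. Proof. by []. Qed.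
Lemma nR1 : (true%:R : R) = 1. Proof. by []. Qed.

Lemma sum_ind (Z : finType) (A : {set Z}) (z0 : Z) (c : R) :
  \sum_(x in A) (x == z0)%:R * c = (z0 \in A)%:R * c.
Proof.
rewrite sumS (bigD1 z0) //= big1 => [|x /negbTE hx]; last by case: ifP; rewrite ?hx ?mul0r.
by rewrite eqxx mul1r addr0; case: ifP; rewrite ?mul1r ?mul0r.
Qed.

Lemma sum_ind_all (Z : finType) (z0 : Z) (c : R) :
  \sum_x (x == z0)%:R * c = c.
Proof.
by rewrite (bigD1 z0) //= big1 => [|x /negbTE ->]; rewrite ?eqxx ?mul1r ?addr0 ?mul0r.
Qed.

Lemma bmin_le_init (Z : finType) (P : pred Z) (F : Z -> R) (z : R) :
  \big[Order.min/z]_(i | P i) F i <= z.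
Proof.
apply: (big_ind (fun w => w <= z)) => //; first by move=> u w hu hw; rewrite ge_min hu.
Abort.

Lemma bmin_le_init (Z : finType) (P : pred Z) (F : Z -> R) (z : R) :
  \big[Order.min/z]_(i | P i) F i <= z.
Proof.
elim: (index_enum Z) => [|i l IH]; rewrite ?big_nil ?big_cons //.
by case: ifP => // _; rewrite ge_min IH orbT.
Qed.

Lemma bmin_le (Z : finType) (P : pred Z) (F : Z -> R) (z : R) i :
  P i -> \big[Order.min/z]_(j | P j) F j <= F i.
Proof.
move=> Pi; have : i \in index_enum Z by rewrite mem_index_enum.
elim: (index_enum Z) => [//|a l IH]; rewrite inE big_cons => /orP[/eqP<-|/IH h].
  by rewrite Pi ge_min lexx.
by case: ifP => _ //; rewrite ge_min h orbT.
Qed.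

Lemma bmin_gt (Z : finType) (P : pred Z) (F : Z -> R) (z c : R) :
  c < z -> (forall j, P j -> c < F j) -> c < \big[Order.min/z]_(j | P j) F j.
Proof.
move=> h0 h; elim: (index_enum Z) => [|a l IH]; rewrite ?big_nil ?big_cons //.
by case: ifP => // Pa; rewrite lt_min IH h.
Qed.

Lemma bmin_att (Z : finType) (P : pred Z) (F : Z -> R) (z : R) :
  \big[Order.min/z]_(j | P j) F j = z \/
  exists i, P i /\ \big[Order.min/z]_(j | P j) F j = F i.
Proof.
elim: (index_enum Z) => [|a l IH]; rewrite ?big_nil ?big_cons; first by left.
case: ifP => // Pa.
set m := \big[Order.min/z]_(j <- l | P j) F j in IH *.
case: (leP (F a) m) => hle.
  by right; exists a; split => //; rewrite min_l.
exact: IH.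
Qed.

Lemma transport_ind n : forall a b, (msr a b <= n)%N -> good a b -> solv a b.
Proof.
elim: n => [|n IH] a b hm hg.
  apply: zero_solv hg => x.
  move: hm; rewrite leqn0 /msr addn_eq0 => /andP[/eqP /cards0_eq hA _].
  have : x \notin [set x | a x != 0%R] by rewrite hA inE.
  by rewrite inE negbK => /eqP.
have hg' := hg; case: hg' => ha hb htot hhall.
case: (boolP [exists x, a x != 0]) => [/existsP [x0 hx0]|/existsPn hno]; last first.
  by apply: zero_solv hg => x; apply/eqP; have := hno x; rewrite negbK.
have hax0 : 0 < a x0 by rewrite lt_def hx0 ha.
case: (boolP [exists A : {set X}, [&& \sum_(x in A) a x == \sum_(y in Nb A) b y,
    [exists x in A, a x != 0] & [exists x in ~: A, a x != 0]]]).
  move/existsP => [A /and3P[/eqP ht /existsP [x1 /andP[h1 h1']] /existsP [x2 /andP[h2 h2']]]].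
  apply: (split_solv IH hm hg ht); first by exists x1.
  by exists x2; rewrite -in_setC.
move/existsPn => hnt.
have [y0 /andP[hey0 hby0]] : exists y0, e x0 y0 && (0 < b y0).
  case: (boolP [exists y0, e x0 y0 && (0 < b y0)]) => [/existsP //|/existsPn hny].
  exfalso; have := hhall [set x0]; rewrite big_set1.
  have -> : \sum_(y in Nb [set x0]) b y = 0.
    apply: big1 => y; rewrite inE => /existsP [x /andP[]]; rewrite inE => /eqP -> hey.
    by apply/eqP; rewrite eq_le hb andbT; have := hny y; rewrite hey /= -leNgt.
  by rewrite leNgt hax0.
pose rel (A : {set X}) := [&& x0 \notin A, y0 \in Nb A & [exists x in A, a x != 0]].
pose slack (A : {set X}) := \sum_(y in Nb A) b y - \sum_(x in A) a x.
have hsl : forall A, rel A -> 0 < slack A.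
  move=> A /and3P[hx0A hy0A hex].
  rewrite /slack subr_gt0 lt_def hhall andbT.
  apply/negP => /eqP heq; have := hnt A; rewrite eq_sym heq eqxx hex /=.
  by move/negP; apply; apply/existsP; exists x0; rewrite in_setC hx0A.
pose dl := \big[Order.min/Order.min (a x0) (b y0)]_(A | rel A) slack A.
have hdl0 : 0 < dl by apply: bmin_gt => //; rewrite lt_min hax0.
have hdla : dl <= a x0 by apply: le_trans (bmin_le_init _ _ _) _; rewrite ge_min lexx.
have hdlb : dl <= b y0 by apply: le_trans (bmin_le_init _ _ _) _; rewrite ge_min lexx orbT.
have hdls : forall A, rel A -> dl <= slack A by move=> A hA; apply: bmin_le.
pose a' x := a x - (x == x0)%:R * dl.
pose b' y := b y - (y == y0)%:R * dl.
have hsa : forall A : {set X}, \sum_(x in A) a' x = \sum_(x in A) a x - (x0 \in A)%:R * dl.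
  by move=> A; rewrite sumrB sum_ind.
have hsb : forall B : {set Y}, \sum_(y in B) b' y = \sum_(y in B) b y - (y0 \in B)%:R * dl.
  by move=> B; rewrite sumrB sum_ind.
have hgood : good a' b'.
  split.
  - move=> x; rewrite /a'; case: eqP => [->|_]; first by rewrite mul1r subr_ge0.
    by rewrite mul0r subr0.
  - move=> y; rewrite /b'; case: eqP => [->|_]; first by rewrite mul1r subr_ge0.
    by rewrite mul0r subr0.
  - by rewrite /a' /b' !sumrB !sum_ind_all htot.
  - move=> A; rewrite hsa hsb.
    case hx0A: (x0 \in A).
      have -> : y0 \in Nb A by rewrite inE; apply/existsP; exists x0; rewrite hx0A.
      by rewrite lerD2r hhall.
    rewrite mul0r subr0.
    case hy0A: (y0 \in Nb A); last by rewrite mul0r subr0 hhall.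
    case: (boolP [exists x in A, a x != 0]) => hex.
      have hr : rel A by rewrite /rel hx0A hy0A hex.
      by have := hdls A hr; rewrite /slack mul1r; lra.
    have -> : \sum_(x in A) a x = 0.
      apply: big1 => x hx; apply/eqP.
      by move/existsPn: hex => /(_ x); rewrite hx /= negbK.
    have := hsb (Nb A); rewrite hy0A => <-.
    apply: sumr_ge0 => y _; rewrite /b'; case: eqP => [->|_]; first by rewrite mul1r subr_ge0.
    by rewrite mul0r subr0.
have hsuppa : forall x, a' x != 0 -> a x != 0.
  move=> x; rewrite /a'; case: (eqVneq x x0) => [->|hne] //.
  by rewrite mul0r subr0.
have hsuppb : forall y, b' y != 0 -> b y != 0.
  move=> y; rewrite /b'; case: (eqVneq y y0) => [->|hne]; first by move=> _; rewrite gt_eqF.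
  by rewrite mul0r subr0.
have hfin : solv a' b' -> solv a b.
  move=> S'.
  have S1 : solv (fun x => (x == x0)%:R * dl) (fun y => (y == y0)%:R * dl).
    exists (fun x y => (x == x0)%:R * (y == y0)%:R * dl); split.
    - by move=> x y; rewrite !mulr_ge0 ?ler0n ?ltW.
    - move=> x y; case: eqP => [->|_]; case: eqP => [->|_] //; by rewrite ?(nR0, mul0r, mulr0, ltxx).
    - move=> x; rewrite (eq_bigr (fun y => (x == x0)%:R * ((y == y0)%:R * dl))); last by move=> y _; rewrite mulrA.
      by rewrite -mulr_sumr sum_ind_all.
    - move=> y; rewrite (eq_bigr (fun x => (x == x0)%:R * ((y == y0)%:R * dl))); last by move=> x _; rewrite mulrA.
      by rewrite sum_ind_all.
  apply: solv_ext (solv_add S' S1) => [x|y]; rewrite /a' /b'; ring.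
apply: hfin.
have hm' : (msr a' b' <= n.+1)%N.
  by apply: leq_trans hm; rewrite /msr leq_add // subset_leq_card //; apply/subsetP => z; rewrite !inE;
    [apply: hsuppa|apply: hsuppb].
case: (eqVneq (a' x0) 0) => ha0.
  apply: IH => //; rewrite -ltnS; apply: leq_trans hm; rewrite /msr -addSn leq_add //.
    by apply: supp_lt => //; exists x0.
  by apply: supp_le.
case: (eqVneq (b' y0) 0) => hb0.
  apply: IH => //; rewrite -ltnS; apply: leq_trans hm; rewrite /msr -addnS leq_add //.
    by apply: supp_le.
  by apply: supp_lt => //; exists y0; rewrite gt_eqF.
have hdla' : dl < a x0.
  rewrite lt_neqAle hdla andbT; apply/eqP => e'.
  by move: ha0; rewrite /a' eqxx mul1r -e' subrr eqxx.
have hdlb' : dl < b y0.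
  rewrite lt_neqAle hdlb andbT; apply/eqP => e'.
  by move: hb0; rewrite /b' eqxx mul1r -e' subrr eqxx.
case: (bmin_att rel slack (Order.min (a x0) (b y0))) => [hatt|[A [hA hatt]]].
  exfalso; move: hatt; rewrite -/dl minElt; case: ifP => _ hatt;
    by move: hdla' hdlb'; rewrite hatt ltxx.
move: hatt; rewrite -/dl => hatt.
case/and3P: (hA) => hx0A hy0A /existsP [x1 /andP[hx1 hx1']].
apply: (split_solv IH hm' hgood (A := A)).
- rewrite hsa hsb (negbTE hx0A) hy0A hatt /slack mul0r mul1r; ring.
- exists x1; split => //; rewrite /a'; case: (eqVneq x1 x0) => [e'|_].
    by move: hx0A; rewrite -e' hx1.
  by rewrite nR0 mul0r subr0.
- by exists x0; split.
Qed.

Lemma transport a b : good a b -> solv a b.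
Proof. by move=> hg; apply: (@transport_ind (msr a b)). Qed.

End Transport.
Section Basics.
Variables (R : realFieldType) (J D N : nat) (theta b0 : 'I_J -> R)
  (f : 'I_J -> 'I_D -> R) (g : nat -> R).
Hypothesis hb0 : forall j, 0 <= b0 j.
Hypothesis hf : forall j d, 0 <= f j d.
Hypothesis hg : forall n, 0 <= g n.

Local Notation Msg := (Msg D N).
Local Notation inT := (inT b0 f g).
Local Notation q := (qprob b0 f g).
Local Notation p := (post_exp theta b0 f).
Local Notation act := (act theta b0 f g).
Local Notation mass := (mass b0 f g).
Local Notation onpath := (onpath b0 f g).
Local Notation bayes := (bayes b0 f g).
Local Notation qsig := (qsig theta b0 f g).
Local Notation qbel0 := (qbel0 b0 f g).
Local Notation v := (act_sig theta b0 f g).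
Local Notation ustar := (ustar theta b0 f g).
Implicit Types (s mu : Msg -> Msg -> R) (m t x y : Msg).

Lemma subm_refl (m : Msg) : subm m m.
Proof. by apply/forallP => d. Qed.

Lemma subm_trans (a b c : Msg) : subm a b -> subm b c -> subm a c.
Proof.
move=> /forallP h1 /forallP h2; apply/forallP => d; exact: leq_trans (h1 d) (h2 d).
Qed.

Lemma subm_anti (a b : Msg) : subm a b -> subm b a -> a = b.
Proof.
move=> /forallP h1 /forallP h2; apply/ffunP => d; apply/val_inj => /=.
by apply/anti_leq; rewrite h1 h2.
Qed.

Lemma marg_ge0 (t : Msg) : 0 <= marg b0 f t.
Proof.
apply: sumr_ge0 => j _; apply: mulr_ge0 => //.
by apply: prodr_ge0 => d _; apply: exprn_ge0.
Qed.

Lemma multinom_gt0 (t : Msg) : 0 < multinom R t.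
Proof.
rewrite /multinom divr_gt0 // ltr0n ?fact_gt0 //.
by rewrite prodn_gt0 // => d; rewrite fact_gt0.
Qed.

Lemma q_ge0 (t : Msg) : 0 <= q t.
Proof.
rewrite /qprob; apply: mulr_ge0; last exact: marg_ge0.
by apply: mulr_ge0 => //; apply: ltW; apply: multinom_gt0.
Qed.

Lemma inT_q (t : Msg) : inT t -> 0 < q t.
Proof. by case/andP. Qed.

Definition num (s : Msg -> Msg -> R) (m : Msg) := \sum_(t | inT t) q t * s t m * p t.

Lemma act_sum (mu : Msg -> Msg -> R) m : act mu m = \sum_(t | inT t) mu m t * p t.
Proof.
rewrite /Defs.act /state_bel.
under eq_bigr do rewrite mulr_suml.
rewrite exchange_big /=; apply: eq_bigr => t _.
by rewrite /post_exp mulr_sumr; apply: eq_bigr => j _; rewrite mulrA.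
Qed.

Lemma act_bayes s m : act (bayes s) m = num s m / mass s m.
Proof.
rewrite act_sum /num mulr_suml; apply: eq_bigr => t _.
by rewrite /Defs.bayes mulrAC.
Qed.

Lemma act_ext (mu1 mu2 : Msg -> Msg -> R) m1 m2 :
  (forall t, inT t -> mu1 m1 t = mu2 m2 t) -> act mu1 m1 = act mu2 m2.
Proof. by move=> h; rewrite !act_sum; apply: eq_bigr => t /h ->. Qed.


Lemma act_qbel0_off s m : ~~ onpath s m -> inT m -> act (qbel0 s) m = p m.
Proof.
move=> hon hm; rewrite act_sum /Defs.qbel0 (negbTE hon).
rewrite (bigD1 m) //= eqxx mul1r big1 ?addr0 // => t /andP[_ /negbTE ->].
by rewrite mul0r.
Qed.

Lemma qsig_inT s m : onpath s m || inT m -> qsig s m = qbel0 s m.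
Proof. by rewrite /Defs.qsig => ->. Qed.

Lemma v_on s m : onpath s m -> v s m = num s m / mass s m.
Proof.
move=> hon; rewrite /act_sig -act_bayes; apply: act_ext => t _.
by rewrite qsig_inT ?hon // /Defs.qbel0 hon.
Qed.

Lemma v_off s m : ~~ onpath s m -> inT m -> v s m = p m.
Proof.
move=> hon hm; rewrite /act_sig -(act_qbel0_off hon hm); apply: act_ext => t _.
by rewrite qsig_inT // hm orbT.
Qed.

Lemma v_inT s m : inT m -> v s m = act (qbel0 s) m.
Proof. by move=> hm; apply: act_ext => t _; rewrite qsig_inT // hm orbT. Qed.

Lemma v_cand s m t : ~~ onpath s m -> ~~ inT m -> inT t -> subm m t ->
  v s m <= v s t.
Proof.
move=> hon hm ht hmt; rewrite (v_inT s ht).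
have hc : cand b0 f g m t by rewrite /cand ht hmt.
rewrite /act_sig act_sum /Defs.qsig (negbTE hon) (negbTE hm) /=.
case: pickP => [t' /andP[hc' /forallP hall]|hnone].
  by rewrite -act_sum; apply: (implyP (hall t) hc).
exfalso.
pose F := fun x => act (qbel0 s) x.
have [x hx hmin] : exists2 x, cand b0 f g m x & forall y, cand b0 f g m y -> F x <= F y.
  have := @arg_minP _ R _ t (cand b0 f g m) F hc.
  by case=> x hx hmin; exists x.
have := hnone x; rewrite hx /=; move/negbT/negP; apply.
by apply/forallP => y; apply/implyP => /hmin.
Qed.

Lemma bmax_ge (I : finType) (P : pred I) (F : I -> R) (z0 : R) i :
  P i -> F i <= \big[Order.max/z0]_(j | P j) F j.
Proof.
move=> Pi; have : i \in index_enum I by rewrite mem_index_enum.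
elim: (index_enum I) => [//|a l IH]; rewrite inE big_cons => /orP[/eqP<-|/IH h].
  by rewrite Pi le_max lexx.
case: ifP => _ //; by rewrite le_max h orbT.
Qed.

Lemma bmax_le (I : finType) (P : pred I) (F : I -> R) (z0 : R) (c : R) :
  z0 <= c -> (forall j, P j -> F j <= c) -> \big[Order.max/z0]_(j | P j) F j <= c.
Proof.
move=> h0 h; elim: (index_enum I) => [|a l IH]; rewrite ?big_nil ?big_cons //.
by case: ifP => // Pa; rewrite ge_max IH h.
Qed.

Lemma ustar_ge s t m : subm m t -> v s m <= ustar s t.
Proof. by move=> h; apply: bmax_ge. Qed.

Lemma ustar_le s t (c : R) : (forall m, subm m t -> v s m <= c) -> ustar s t <= c.
Proof. by move=> h; apply: bmax_le => //; apply: h; apply: subm_refl. Qed.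

Lemma ustar_mono s m t : subm m t -> ustar s m <= ustar s t.
Proof.
by move=> h; apply: ustar_le => x hx; apply: ustar_ge; apply: subm_trans hx h.
Qed.


Lemma mass_ge s m t : inT t -> (forall t', inT t' -> 0 <= s t' m) ->
  q t * s t m <= mass s m.
Proof.
move=> ht hs; rewrite /Defs.mass (bigD1 t) //= lerDl.
by apply: sumr_ge0 => t' /andP[h _]; apply: mulr_ge0; [apply: q_ge0|apply: hs].
Qed.

Lemma onpath_of s m t : inT t -> (forall t', inT t' -> 0 <= s t' m) ->
  0 < s t m -> onpath s m.
Proof.
move=> ht hs hp; rewrite /Defs.onpath; apply: lt_le_trans (mass_ge ht hs).
by apply: mulr_gt0 => //; apply: inT_q.
Qed.

Lemma offpath_zero s m t : (forall t', inT t' -> 0 <= s t' m) ->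
  ~~ onpath s m -> inT t -> s t m = 0.
Proof.
move=> hs hon ht.
have hm : mass s m = 0.
  apply/eqP; rewrite eq_le; rewrite /Defs.onpath in hon.
  by rewrite leNgt hon /=; apply: sumr_ge0 => t' h; apply: mulr_ge0; [apply: q_ge0|apply: hs].
have := mass_ge ht hs; rewrite hm => h.
have hq := inT_q ht.
apply/eqP; rewrite eq_le hs // andbT.
by rewrite -(pmulr_rle0 _ hq).
Qed.

Lemma strat_nonneg s : is_strategy b0 f g s -> forall m t, inT t -> 0 <= s t m.
Proof. by move=> hs m t ht; case: (hs t ht) => h _ _. Qed.

Lemma strat_one s t m : is_strategy b0 f g s -> inT t -> s t t = 1 -> 0 < s t m -> m = t.
Proof.
move=> hs ht h1 hp; case: (hs t ht) => hnn hsum _.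
apply/eqP; apply: contraTT hp => hne; rewrite -leNgt.
move: hsum; rewrite (bigD1 t) //= h1 => /(congr1 (fun z : R => z - 1)).
rewrite subrr addrC addrK => h0.
have := psumr_eq0P (P := fun x => x != t) (F := s t) (fun i _ => hnn i) h0.
by move/(_ m hne) => ->.
Qed.

Lemma inner_zero s m : is_strategy b0 f g s ->
  \sum_(t | inT t) q t * s t m * (p t - v s m) = 0.
Proof.
move=> hs; have hnn := strat_nonneg hs m.
case hon: (onpath s m).
  rewrite (v_on hon).
  under eq_bigr do rewrite mulrBr.
  rewrite sumrB -mulr_suml -/(num s m) -/(Defs.mass b0 f g s m) mulrC mulfVK ?subrr //.
  by rewrite /Defs.onpath in hon; rewrite gt_eqF.
by apply: big1 => t ht; rewrite (offpath_zero hnn (negbT hon) ht) mulr0 mul0r.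
Qed.

Lemma abc_props s t m : abc_equilibrium theta b0 f g s -> inT t -> 0 < s t m ->
  [/\ subm m t, onpath s m & ustar s t = v s m].
Proof.
move=> [hs hbr ha hb hc] ht hp.
have hsub : subm m t by case: (hs t ht) => _ _ /(_ m hp).
split => //; first exact: onpath_of ht (strat_nonneg hs m) hp.
apply/eqP; rewrite eq_le ustar_ge // andbT.
by apply: ustar_le => m' hm'; apply: (hbr t ht m hp m' hm').
Qed.

Lemma VI s (w : Msg -> R) : abc_equilibrium theta b0 f g s ->
  (forall x y, subm x y -> w x <= w y) ->
  \sum_(t | inT t) q t * ((p t - ustar s t) * (w t - ustar s t)) <= 0.
Proof.
move=> habc hw; have habc' := habc; case: habc' => [hs hbr ha hb hc].
have -> : \sum_(t | inT t) q t * ((p t - ustar s t) * (w t - ustar s t)) =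
   \sum_(t | inT t) \sum_m q t * s t m * ((p t - ustar s t) * (w t - ustar s t)).
  apply: eq_bigr => t ht; rewrite -mulr_suml -mulr_sumr.
  by case: (hs t ht) => _ -> _; rewrite mulr1.
apply: (@le_trans _ _ (\sum_(t | inT t) \sum_m q t * s t m * ((p t - v s m) * (w m - v s m)))).
  apply: ler_sum => t ht; apply: ler_sum => m _.
  have hnn := strat_nonneg hs m ht.
  case: (ltrP 0 (s t m)) => hpos; last first.
    have -> : s t m = 0 by apply/eqP; rewrite eq_le hpos hnn.
    by rewrite !mulr0 !mul0r.
  have [hsub _ hu] := abc_props habc ht hpos.
  apply: ler_wpM2l; first by apply: mulr_ge0 => //; apply: q_ge0.
  rewrite hu; case: (ltrP (v s m) (p t)) => hpt.
    have hmt : m = t by apply: (strat_one hs ht) => //; apply: hc => //; rewrite hu.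
    by rewrite hmt.
  have := hw _ _ hsub; nra.
rewrite exchange_big /= big1 // => m _.
have -> : \sum_(t | inT t) q t * s t m * ((p t - v s m) * (w m - v s m)) =
  (\sum_(t | inT t) q t * s t m * (p t - v s m)) * (w m - v s m).
  by rewrite mulr_suml; apply: eq_bigr => t _; rewrite mulrA.
by rewrite inner_zero // mul0r.
Qed.

Lemma uniq_outcome s1 s2 : abc_equilibrium theta b0 f g s1 -> abc_equilibrium theta b0 f g s2 ->
  forall t, inT t -> ustar s1 t = ustar s2 t.
Proof.
move=> h1 h2.
have V1 := VI (w := ustar s2) h1 (fun x y => ustar_mono s2 (m:=x) (t:=y)).
have V2 := VI (w := ustar s1) h2 (fun x y => ustar_mono s1 (m:=x) (t:=y)).
have := lerD V1 V2; rewrite addr0 -big_split /=.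
under eq_bigr do rewrite -mulrDr.
move=> hle.
have hz : \sum_(t | inT t) q t * ((ustar s2 t - ustar s1 t) ^+ 2) = 0.
  apply/eqP; rewrite eq_le; apply/andP; split.
    apply: le_trans hle; rewrite le_eqVlt; apply/orP; left; apply/eqP.
    by apply: eq_bigr => t _; congr (_ * _); ring.
  by apply: sumr_ge0 => t _; apply: mulr_ge0; [apply: q_ge0|apply: sqr_ge0].
move=> t ht.
have hnn : forall i, inT i -> 0 <= q i * (ustar s2 i - ustar s1 i) ^+ 2.
  by move=> i _; apply: mulr_ge0; [apply: q_ge0|apply: sqr_ge0].
have := psumr_eq0P hnn hz.
move=> /(_ t ht) /eqP; rewrite mulf_eq0 (gt_eqF (inT_q ht)) /= sqrf_eq0 subr_eq0.
by move/eqP.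
Qed.

Definition Bk s m := num s m / mass s m.

Lemma avg_contra s m t0 : (forall t, inT t -> 0 <= s t m) -> onpath s m ->
  (forall t, inT t -> 0 < s t m -> p t <= Bk s m) ->
  inT t0 -> 0 < s t0 m -> p t0 < Bk s m -> False.
Proof.
move=> hnn hon hall ht0 hs0 hlt.
have hM : 0 < mass s m by [].
have hz : \sum_(t | inT t) q t * s t m * (p t - Bk s m) = 0.
  under eq_bigr do rewrite mulrBr.
  rewrite sumrB -mulr_suml -/(num s m) -/(Defs.mass b0 f g s m) /Bk mulrC mulfVK ?subrr //.
  by rewrite gt_eqF.
have : \sum_(t | inT t) q t * s t m * (p t - Bk s m) < 0.
  rewrite (bigD1 t0) //=.
  have h1 : q t0 * s t0 m * (p t0 - Bk s m) < 0.
    by rewrite pmulr_rlt0 ?subr_lt0 // mulr_gt0 // inT_q.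
  have h2 : \sum_(t | inT t && (t != t0)) q t * s t m * (p t - Bk s m) <= 0.
    apply: sumr_le0 => t /andP[ht _].
    case: (ltrP 0 (s t m)) => hp.
      by rewrite pmulr_rle0 ?subr_le0 ?hall // mulr_gt0 // inT_q.
    have -> : s t m = 0 by apply/eqP; rewrite eq_le hp hnn.
    by rewrite mulr0 mul0r.
  by apply: lt_le_trans (ltr_leD h1 h2) _; rewrite addr0.
by rewrite hz ltxx.
Qed.

Section Game1.
Variables (eps epsc : Msg -> R) (s : Msg -> Msg -> R).
Hypothesis heps : forall t, inT t -> 0 < eps t /\ 0 < epsc t.
Hypothesis hpbe : pbe_perturbed theta b0 f g eps epsc s.

Definition sends t m := if m == t then epsc t < s t t else 0 < s t m.

Lemma g_nonneg t m : inT t -> 0 <= s t m.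
Proof.
move=> ht; case: hpbe => hle [rho [mu [hrho _ hs _ _]]].
rewrite hs //; case: (hrho t ht) => hnn _ _.
apply: addr_ge0; first by apply: mulr_ge0; [apply: ltW; case: (heps ht)|apply: ler0n].
by apply: mulr_ge0; [rewrite subr_ge0 hle|apply: hnn].
Qed.

Lemma g_diag t : inT t -> epsc t <= s t t.
Proof.
move=> ht; case: hpbe => hle [rho [mu [hrho _ hs _ _]]].
rewrite hs // eqxx mulr1 lerDl; case: (hrho t ht) => hnn _ _.
by apply: mulr_ge0; [rewrite subr_ge0 hle|apply: hnn].
Qed.

Lemma g_onT t : inT t -> onpath s t.
Proof.
move=> ht; apply: (onpath_of ht (fun t' ht' => g_nonneg t ht')).
by apply: lt_le_trans (g_diag ht); case: (heps ht).
Qed.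

Lemma g_rho t m : inT t -> sends t m ->
  exists rho mu, [/\ is_strategy b0 f g rho,
     (forall m, onpath s m -> act mu m = Bk s m),
     (forall t, inT t -> forall m, s t m = epsc t * (m == t)%:R + (1 - epsc t) * rho t m),
     (forall t, inT t -> forall m, 0 < rho t m -> forall m', subm m' t ->
         act mu m' + eps t * (m' == t)%:R <= act mu m + eps t * (m == t)%:R) &
     0 < rho t m].
Proof.
move=> ht hsd; case: hpbe => hle [rho [mu [hrho hmu hs hb hbr]]].
exists rho, mu; split => //.
- move=> m' hon; rewrite /Bk -act_bayes; apply: act_ext => t' ht'; exact: hb.
- case: (hrho t ht) => hnn _ _.
  rewrite /sends in hsd; move: hsd.
  case: eqP => [-> | /eqP hne] hsd.
    move: hsd; rewrite (hs t ht t) eqxx mulr1 ltrDl => hsd.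
    have := hnn t; rewrite le_eqVlt => /orP[/eqP h0|//].
    by move: hsd; rewrite -h0 mulr0 ltxx.
  move: hsd; rewrite (hs t ht m) (negbTE hne) mulr0 add0r.
  have := hnn m; rewrite le_eqVlt => /orP[/eqP <-|//].
  by rewrite mulr0 ltxx.
Qed.

Lemma g_sends_pos t m : inT t -> m != t -> 0 < s t m -> sends t m.
Proof. by move=> _ /negbTE hne h; rewrite /sends hne. Qed.

Lemma g_sub t m : inT t -> sends t m -> subm m t.
Proof.
move=> ht hsd; have [rho [mu [hrho _ _ _ hp]]] := g_rho ht hsd.
by case: (hrho t ht) => _ _ /(_ m hp).
Qed.

Lemma g_BR t m m' : inT t -> sends t m -> subm m' t -> onpath s m -> onpath s m' ->
  Bk s m' + eps t * (m' == t)%:R <= Bk s m + eps t * (m == t)%:R.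
Proof.
move=> ht hsd hsub hon hon'; have [rho [mu [hrho hact _ hbr hp]]] := g_rho ht hsd.
by rewrite -(hact _ hon) -(hact _ hon'); apply: hbr.
Qed.

Lemma g_excl t x : inT t -> 0 < s t x -> x != t -> Bk s t = p t.
Proof.
move=> ht hpos hne.
have hsd : sends t x by apply: g_sends_pos.
have [rho [mu [hrho hact hs hbr hp]]] := g_rho ht hsd.
have hsub := g_sub ht hsd.
have hz : forall t'', inT t'' -> t'' != t -> s t'' t = 0.
  move=> t'' ht'' hne''.
  rewrite hs // (negbTE (negbT (introF eqP (fun e => (elimN eqP hne'') (esym e))))).
  rewrite mulr0 add0r.
  case: (hrho t'' ht'') => hnn _ hsup.
  have := hnn t; rewrite le_eqVlt => /orP[/eqP <-|hp'']; first by rewrite mulr0.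
  exfalso.
  have hsub'' := hsup t hp''.
  have h1 := hbr t ht x hp t (subm_refl t).
  have hxt'' : x != t''.
    apply/eqP => e; move: hsub''; rewrite -e => hxt.
    by move: hne; rewrite (subm_anti hsub hxt) eqxx.
  have h2 := hbr t'' ht'' t hp'' x (subm_trans hsub hsub'').
  move: h1 h2; rewrite eqxx (negbTE hne) (negbTE hxt'').
  rewrite (_ : (t == t'') = false); last by apply/negbTE; rewrite eq_sym.
  have := heps ht; case=> he _; rewrite !mulr0 !addr0 mulr1 => h1 h2.
  lra.
have hstt : 0 < s t t by apply: lt_le_trans (g_diag ht); case: (heps ht).
have hM : mass s t = q t * s t t.
  rewrite /Defs.mass (bigD1 t) //= big1 ?addr0 // => t'' /andP[h h'].
  by rewrite hz // mulr0.
have hN : num s t = q t * s t t * p t.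
  rewrite /num (bigD1 t) //= big1 ?addr0 // => t'' /andP[h h'].
  by rewrite hz // mulr0 mul0r.
rewrite /Bk hM hN mulrC mulKf //.
by rewrite gt_eqF // mulr_gt0 // inT_q.
Qed.

Lemma g_nonT m t : ~~ inT m -> inT t -> s t m = 0.
Proof.
move=> hm ht; apply/eqP; rewrite eq_le g_nonneg // andbT.
rewrite leNgt; apply/negP => hpos.
have hon : onpath s m := onpath_of ht (fun t' ht' => g_nonneg m ht') hpos.
have hne : forall t', inT t' -> m != t'.
  by move=> t' ht'; apply/eqP => e; move: hm; rewrite e ht'.
have hall : forall t', inT t' -> 0 < s t' m -> p t' < Bk s m.
  move=> t' ht' hp'.
  have hsd := g_sends_pos ht' (hne t' ht') hp'.
  have := g_BR ht' hsd (subm_refl t') hon (g_onT ht').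
  rewrite eqxx (negbTE (hne t' ht')) mulr1 mulr0 addr0 (g_excl ht' hp' (hne t' ht')).
  by case: (heps ht') => he _; lra.
apply: (avg_contra (fun t' ht' => g_nonneg m ht') hon _ ht hpos (hall t ht hpos)).
by move=> t' ht' hp'; apply: ltW; apply: hall.
Qed.

Lemma g_Ble t : inT t -> Bk s t <= p t.
Proof.
move=> ht; rewrite leNgt; apply/negP => hlt.
have hon := g_onT ht.
have hstt : 0 < s t t by apply: lt_le_trans (g_diag ht); case: (heps ht).
apply: (avg_contra (fun t' ht' => g_nonneg t ht') hon _ ht hstt hlt).
move=> t' ht' hp'.
case: (eqVneq t' t) => [-> | hne]; first exact: ltW.
have hne' : t != t' by rewrite eq_sym.
have hsd := g_sends_pos ht' hne' hp'.
have := g_BR ht' hsd (subm_refl t') hon (g_onT ht').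
rewrite eqxx (negbTE hne') mulr1 mulr0 addr0 (g_excl ht' hp' hne').
by case: (heps ht') => he _ h; apply: ltW; lra.
Qed.

End Game1.

Section Limit.
Variables (eps epsc : nat -> Msg -> R) (sk : nat -> Msg -> Msg -> R) (s : Msg -> Msg -> R).
Hypothesis hpos : forall k t, inT t -> 0 < eps k t /\ 0 < epsc k t.
Hypothesis hcv : forall t, inT t -> cvg_to (fun k => eps k t) 0 /\ cvg_to (fun k => epsc k t) 0.
Hypothesis hpbe : forall k, pbe_perturbed theta b0 f g (eps k) (epsc k) (sk k).
Hypothesis hlim : forall t, inT t -> forall m, cvg_to (fun k => sk k t m) (s t m).

Let hposk k := hpos k.

Lemma l_nonneg t m : inT t -> 0 <= s t m.
Proof.
move=> ht; apply: (cvg_le (cvg_cst 0) (hlim ht m)).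
by apply: ev_true => k; apply: (g_nonneg (hposk k) (hpbe k)).
Qed.

Lemma cvg_uniq (u : nat -> R) (a b : R) : cvg_to u a -> cvg_to u b -> a = b.
Proof.
move=> ha hb; apply/eqP; rewrite eq_le.
by rewrite (cvg_le ha hb (ev_true (fun k => lexx _))) (cvg_le hb ha (ev_true (fun k => lexx _))).
Qed.

Lemma l_strategy : is_strategy b0 f g s.
Proof.
move=> t ht; split.
- by move=> m; apply: l_nonneg.
- have h1 : cvg_to (fun k => \sum_m sk k t m) (\sum_m s t m).
    by apply: cvg_sum_seq => m _; apply: hlim.
  have h2 : cvg_to (fun k => \sum_m sk k t m) 1.
    apply: (cvg_eq (u := fun _ => 1)) => [k|]; last exact: cvg_cst.
    case: (hpbe k) => hle [rho [mu [hrho _ hs _ _]]].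
    rewrite (eq_bigr _ (fun m _ => hs t ht m)) big_split /= -!mulr_sumr.
    case: (hrho t ht) => _ -> _; rewrite mulr1.
    rewrite (bigD1 t) //= eqxx big1 ?addr0 ?mulr1; first by ring.
    by move=> m /negbTE ->.
  exact: cvg_uniq h1 h2.
- move=> m hm.
  have [K HK] := cvg_gt (hlim ht m) hm.
  have hk := HK K (leqnn K).
  case: (eqVneq m t) => [->|hne]; first exact: subm_refl.
  exact: (g_sub (hpbe K) ht (g_sends_pos (epsc K) ht hne hk)).
Qed.

Lemma l_mass m : cvg_to (fun k => mass (sk k) m) (mass s m).
Proof. by apply: cvg_sum_seq => t ht; apply: cvg_scale; apply: hlim. Qed.

Lemma l_num m : cvg_to (fun k => num (sk k) m) (num s m).
Proof.
apply: cvg_sum_seq => t ht.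
apply: (cvg_eq (u := fun k => (q t * p t) * sk k t m)); first by move=> k; ring.
have -> : q t * s t m * p t = (q t * p t) * s t m by ring.
by apply: cvg_scale; apply: hlim.
Qed.

Lemma l_onk m : onpath s m -> ev (fun k => onpath (sk k) m).
Proof. by move=> hon; apply: cvg_gt (l_mass m) hon. Qed.

Lemma l_B m : onpath s m -> cvg_to (fun k => Bk (sk k) m) (v s m).
Proof. by move=> hon; rewrite (v_on hon); apply: cvg_div => //; [apply: l_num|apply: l_mass]. Qed.

Lemma l_sends t m : inT t -> 0 < s t m -> ev (fun k => sends (epsc k) (sk k) t m).
Proof.
move=> ht hp; rewrite /sends; case: eqP => [e|_]; last exact: cvg_gt (hlim ht m) hp.
move: hp; rewrite e => hp.
have hh : 0 < s t t / 2 by rewrite divr_gt0.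
have hA := cvg_lt (proj2 (hcv ht)) hh.
have hlt : s t t / 2 < s t t by lra.
have hB := cvg_gt (hlim ht t) hlt.
by apply: ev_mono (ev_and hA hB) => k [h1 h2]; apply: lt_trans h1 h2.
Qed.

Lemma l_onpath_of t m : inT t -> 0 < s t m -> onpath s m.
Proof. by move=> ht hp; apply: onpath_of ht (fun t' ht' => l_nonneg m ht') hp. Qed.

Lemma l_BRon t m m' : inT t -> 0 < s t m -> subm m' t -> onpath s m' -> v s m' <= v s m.
Proof.
move=> ht hp hsub hon'.
have hon := l_onpath_of ht hp.
have hB := l_B hon; have hB' := l_B hon'.
have [he _] := hcv ht.
have hBe : cvg_to (fun k => Bk (sk k) m + eps k t) (v s m) by rewrite -[v s m]addr0; apply: cvg_add.
apply: (cvg_le hB' hBe).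
apply: ev_mono (ev_and (l_sends ht hp) (ev_and (l_onk hon) (l_onk hon'))) => k [h1 [h2 h3]].
have := g_BR (hpbe k) ht h1 hsub h2 h3.
have [hek _] := hpos k ht.
case: (m' == t); case: (m == t); rewrite /= ?mulr1 ?mulr0 ?addr0; lra.
Qed.

Lemma exists_pos t : inT t -> exists x, 0 < s t x.
Proof.
move=> ht; case: (l_strategy ht) => hnn hsum _.
case: (boolP [exists x, 0 < s t x]) => [/existsP //|/existsPn hno].
have : \sum_m s t m <= 0.
  by apply: sumr_le0 => m _; rewrite leNgt hno.
by rewrite hsum ler10.
Qed.

Lemma l_L m' t m : inT m' -> ~~ onpath s m' -> inT t -> subm m' t -> 0 < s t m ->
  p m' <= v s m.
Proof.
move=> hm' hoff ht hsub hp.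
have [x hx] := exists_pos hm'.
have hxne : x != m'.
  apply/eqP => e; move: hx; rewrite e (offpath_zero (fun t' ht' => l_nonneg m' ht') hoff hm').
  by rewrite ltxx.
have hxsub : subm x m' by case: (l_strategy hm') => _ _ /(_ x hx).
have honx := l_onpath_of hm' hx.
have hon := l_onpath_of ht hp.
have [he _] := hcv ht.
have hBe : cvg_to (fun k => Bk (sk k) m + eps k t) (v s m) by rewrite -[v s m]addr0; apply: cvg_add; [apply: l_B|].
apply: (cvg_le (cvg_cst (p m')) hBe).
apply: ev_mono (ev_and (cvg_gt (hlim hm' x) hx) (ev_and (l_sends ht hp)
   (ev_and (l_onk honx) (l_onk hon)))) => k [h1 [h2 [h3 h4]]].
have hex := g_excl (hposk k) (hpbe k) hm' h1 hxne.
have hsd' := g_sends_pos (epsc k) hm' hxne h1.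
have b1 := g_BR (hpbe k) hm' hsd' (subm_refl m') h3 (g_onT (hposk k) (hpbe k) hm').
have b2 := g_BR (hpbe k) ht h2 (subm_trans hxsub hsub) h4 h3.
move: b1 b2; rewrite eqxx (negbTE hxne) hex mulr1 mulr0 addr0.
have [hek _] := hpos k ht; have [hek' _] := hpos k hm'.
case: (x == t); case: (m == t); rewrite /= ?mulr1 ?mulr0 ?addr0; lra.
Qed.

Lemma l_BR : best_response_to theta b0 f g (qsig s) s.
Proof.
move=> t ht m hp m' hsub.
have goal_t : v s t <= v s m.
  case hont: (onpath s t); first exact: l_BRon ht hp (subm_refl t) hont.
  by rewrite (v_off (negbT hont) ht); exact: (l_L ht (negbT hont) ht (subm_refl t) hp).
rewrite -/(act_sig theta b0 f g s m') -/(act_sig theta b0 f g s m).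
case hon': (onpath s m'); first exact: l_BRon ht hp hsub hon'.
case hT': (inT m').
  by rewrite (v_off (negbT hon') hT'); apply: l_L hT' (negbT hon') ht hsub hp.
apply: le_trans goal_t.
exact: v_cand (negbT hon') (negbT hT') ht hsub.
Qed.

Lemma l_a : prop_a b0 f g s.
Proof.
move=> m hon; apply/negPn/negP => hm.
have : mass s m = 0.
  apply: cvg_uniq (l_mass m) _.
  apply: (cvg_eq (u := fun _ => 0)) => [k|]; last exact: cvg_cst.
  rewrite /Defs.mass big1 // => t ht.
  by rewrite (g_nonT (hposk k) (hpbe k) hm ht) mulr0.
by rewrite /Defs.onpath in hon => h; move: hon; rewrite h ltxx.
Qed.

Lemma l_c : prop_c theta b0 f g s.
Proof.
move=> t ht hlt; apply/eqP/negPn/negP => hne.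
have [x /andP[hx hxne]] : exists x, (0 < s t x) && (x != t).
  case: (boolP [exists x, (0 < s t x) && (x != t)]) => [/existsP //|/existsPn hno].
  case: (l_strategy ht) => hnn hsum _.
  move: hsum; rewrite (bigD1 t) //= big1 ?addr0.
    by move=> e; move: hne; rewrite e eqxx.
  move=> m hm; apply/eqP; rewrite eq_le hnn andbT leNgt.
  by have := hno m; rewrite hm andbT.
have honx := l_onpath_of ht hx.
have hsub : subm x t by case: (l_strategy ht) => _ _ /(_ x hx).
have : p t <= v s x.
  apply: (cvg_le (cvg_cst (p t)) (l_B honx)).
  apply: ev_mono (ev_and (cvg_gt (hlim ht x) hx) (l_onk honx)) => k [h1 h2].
  have hsd := g_sends_pos (epsc k) ht hxne h1.
  have := g_BR (hpbe k) ht hsd (subm_refl t) h2 (g_onT (hposk k) (hpbe k) ht).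
  rewrite eqxx (negbTE hxne) (g_excl (hposk k) (hpbe k) ht h1 hxne) mulr1 mulr0 addr0.
  have [hek _] := hpos k ht; lra.
have := ustar_ge s (t := t) hsub.
lra.
Qed.

Lemma l_b : prop_b theta b0 f g s.
Proof.
move=> t ht hlt; apply/negP => hon.
have [ts /andP[hts hp]] : exists ts, inT ts && (0 < s ts t).
  case: (boolP [exists ts, inT ts && (0 < s ts t)]) => [/existsP //|/existsPn hno].
  move: hon; rewrite /Defs.onpath /Defs.mass.
  rewrite big1 ?ltxx // => t' ht'.
  have := l_nonneg t ht'; rewrite le_eqVlt => /orP[/eqP <-|h]; first by rewrite mulr0.
  by have := hno t'; rewrite ht' h.
have hsub : subm t ts by case: (l_strategy hts) => _ _ /(_ t hp).
have h1 : ustar s t <= v s t.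
  apply: ustar_le => x hx.
  exact: (l_BR hts hp (subm_trans hx hsub)).
have h2 : v s t <= p t.
  apply: (cvg_le (l_B hon) (cvg_cst (p t))).
  by apply: ev_true => k; apply: (g_Ble (hposk k) (hpbe k) ht).
lra.
Qed.

End Limit.

Lemma TL_abc s : truth_leaning theta b0 f g s -> abc_equilibrium theta b0 f g s.
Proof.
move=> [eps [epsc [sk [hpos hcv hpbe hlim]]]]; rewrite /abc_equilibrium.
split.
- exact: (l_strategy hpos hpbe hlim).
- exact: (l_BR hpos hcv hpbe hlim).
- exact: (l_a hpos hpbe hlim).
- exact: (l_b hpos hcv hpbe hlim).
- exact: (l_c hpos hpbe hlim).
Qed.
Implicit Types (Rem W U : {set Msg}).

Definition upc (Rem W : {set Msg}) :=
  (W \subset Rem) && [forall x in W, forall y in Rem, subm x y ==> (y \in W)].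
Definition dev (c : R) (W : {set Msg}) := \sum_(t in W) q t * (p t - c).
Definition wsum (W : {set Msg}) := \sum_(t in W) q t.
Definition psum (W : {set Msg}) := \sum_(t in W) q t * p t.
Definition avg (W : {set Msg}) := psum W / wsum W.

Definition Props (Rem : {set Msg}) (u : Msg -> R) (s : Msg -> Msg -> R) :=
 [/\ (forall t, t \in Rem -> [/\ forall m, 0 <= s t m, \sum_m s t m = 1 &
        forall m, 0 < s t m -> [/\ subm m t, m \in Rem & u m = u t]]),
   (forall x t, x \in Rem -> t \in Rem -> subm x t -> u x <= u t),
   (forall m, m \in Rem -> \sum_(t in Rem) q t * s t m * (p t - u m) = 0),
   (forall t, t \in Rem -> u t < p t -> s t t = 1) &
   ((forall t, t \in Rem -> p t < u t -> forall t', t' \in Rem -> s t' t = 0) /\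
   (forall c, (forall W, W != set0 -> upc Rem W -> dev c W <= 0) ->
      forall t, t \in Rem -> u t <= c))].

Lemma dev_eq c W : dev c W = psum W - c * wsum W.
Proof.
rewrite /dev /psum /wsum mulr_sumr -sumrB; apply: eq_bigr => t _; ring.
Qed.

Lemma wsum_gt0 (Rem W : {set Msg}) : (forall t, t \in Rem -> inT t) ->
  W != set0 -> W \subset Rem -> 0 < wsum W.
Proof.
move=> hT /set0Pn [t0 ht0] hsub.
rewrite /wsum (bigD1 t0) //=; apply: ltr_pwDl.
  by apply: inT_q; apply: hT; apply: (subsetP hsub).
by apply: sumr_ge0 => t _; apply: q_ge0.
Qed.

Lemma upc_sub Rem W x : upc Rem W -> x \in W -> x \in Rem.
Proof. by case/andP => /subsetP h _ /h. Qed.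

Lemma upc_up Rem W x y : upc Rem W -> x \in W -> y \in Rem -> subm x y -> y \in W.
Proof.
case/andP => _ /forallP h hx hy hxy.
by move: (h x); rewrite hx /= => /forallP /(_ y); rewrite hy hxy.
Qed.

Lemma upcP Rem W : W \subset Rem ->
  (forall x y, x \in W -> y \in Rem -> subm x y -> y \in W) -> upc Rem W.
Proof.
move=> hs h; rewrite /upc hs /=; apply/forallP => x; apply/implyP => hx.
by apply/forallP => y; apply/implyP => hy; apply/implyP; apply: h.
Qed.

Lemma sum_split (W U : {set Msg}) (F : Msg -> R) :
  \sum_(t in W) F t = \sum_(t in W :&: U) F t + \sum_(t in W :\: U) F t.
Proof.
rewrite !sumS -big_split /=; apply: eq_bigr => t _; rewrite !inE.
by case: (t \in U); case: (t \in W); rewrite /= ?addr0 ?add0r.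
Qed.

Lemma props_nil u s : Props set0 u s.
Proof. by split => [t|x t|m|t|]; rewrite ?inE //; split => [t|c _ t]; rewrite inE. Qed.


Lemma build_step Rem U (c : R) u' s' :
  (forall t, t \in Rem -> inT t) -> U != set0 -> upc Rem U -> dev c U = 0 ->
  (forall W, W != set0 -> upc Rem W -> dev c W <= 0) ->
  Props (Rem :\: U) u' s' -> exists u s, Props Rem u s.
Proof.
move=> hT hU0 hUup hdevU hmax [P1 P2 P3 P4 [P5 P6]].
have hUR : forall t, t \in U -> t \in Rem by move=> t; apply: upc_sub hUup.
have hUT : forall t, t \in U -> inT t by move=> t /hUR /hT.
pose a l := if (l \in U) && (p l < c) then q l * (c - p l) else 0.
pose b h := if (h \in U) && (c < p h) then q h * (p h - c) else 0.
pose e := fun l h : Msg => subm h l.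
have hba : forall x, b x - a x = if x \in U then q x * (p x - c) else 0.
  move=> x; rewrite /a /b; case: (x \in U) => /=; last by rewrite subr0.
  case: (ltrgtP (p x) c) => h; rewrite ?subr0 ?sub0r; first by ring.
    by [].
  by rewrite h subrr mulr0.
have ha : forall x, 0 <= a x.
  move=> x; rewrite /a; case: ifP => // /andP[_ h].
  by apply: mulr_ge0; [apply: q_ge0|rewrite subr_ge0 ltW].
have hb : forall x, 0 <= b x.
  move=> x; rewrite /b; case: ifP => // /andP[_ h].
  by apply: mulr_ge0; [apply: q_ge0|rewrite subr_ge0 ltW].
have hgood : good e a b.
  split => //.
    apply/eqP; rewrite eq_sym -subr_eq0 -sumrB (eq_bigr _ (fun x _ => hba x)).
    by rewrite -sumS -/(dev c U) hdevU.
  move=> A; set NA := Nb e A.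
  have hA_NA : forall x, x \in A -> x \in NA.
    by move=> x hx; rewrite inE; apply/existsP; exists x; rewrite hx /e subm_refl.
  apply: le_trans (sum_sub hA_NA ha) _.
  rewrite -subr_ge0 -sumrB (eq_bigr _ (fun x _ => hba x)).
  have -> : \sum_(i in NA) (if i \in U then q i * (p i - c) else 0) =
            \sum_(i in U :&: NA) q i * (p i - c).
    rewrite !sumS; apply: eq_bigr => y _; rewrite in_setI.
    by case: (y \in U); case: (y \in NA).
  have hsp := sum_split U NA (fun t => q t * (p t - c)).
  rewrite -/(dev c U) hdevU in hsp.
  have hZ : \sum_(t in U :\: NA) q t * (p t - c) <= 0.
    case: (eqVneq (U :\: NA) set0) => [-> | hne]; first by rewrite big_set0.
    apply: (hmax _ hne); apply: upcP.
      by apply/subsetP => x; rewrite inE => /andP[_ /hUR].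
    move=> x y; rewrite !inE => /andP[hxNA hxU] hy hxy.
    rewrite (upc_up hUup hxU hy hxy) andbT.
    apply: contra hxNA => /existsP [x' /andP[hx' hyx']].
    by apply/existsP; exists x'; rewrite hx' /e (subm_trans hxy hyx').
  lra.
have [F [hF0 hFe hFrow hFcol]] := transport hgood.
have hFle : forall x y, F x y <= b y.
  move=> x y; rewrite -hFcol (bigD1 x) //= lerDl.
  by apply: sumr_ge0 => i _; apply: hF0.
have hFb : forall x y, 0 < F x y -> (y \in U) && (c < p y).
  move=> x y hp; have := lt_le_trans hp (hFle x y); rewrite /b.
  by case: ifP => //; rewrite ltxx.
have hFa : forall x y, a x = 0 -> F x y = 0.
  move=> x y ha0; have := hFrow x; rewrite ha0 => hz.
  by have := psumr_eq0P (fun i _ => hF0 x i) hz; move/(_ y isT).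
have hapos : forall t, t \in U -> p t < c -> 0 < a t.
  move=> t htU hlt; rewrite /a htU hlt /=.
  by apply: mulr_gt0; [apply: inT_q; apply: hUT|rewrite subr_gt0].
pose u t := if t \in U then c else u' t.
pose s t m := if t \in U then (if p t < c then F t m / a t else (m == t)%:R) else s' t m.
have hRem : forall t, t \in Rem -> (t \in U) || (t \in Rem :\: U).
  by move=> t ht; rewrite inE ht andbT orbN.
have hsnn : forall t m, t \in Rem -> 0 <= s t m.
  move=> t m ht; rewrite /s; case: ifP => htU.
    case: ifP => hlt; last by rewrite ler0n.
    by rewrite divr_ge0 // ltW // hapos.
  have ht' : t \in Rem :\: U by rewrite inE htU ht.
  by case: (P1 t ht') => h _ _.
have hsU : forall t m, t \in U -> 0 < s t m -> [/\ m \in U, subm m t &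
                (p t < c -> c < p m)].
  move=> t m htU; rewrite /s htU; case: ifP => hlt hp.
    have hF : 0 < F t m.
      by move: hp; rewrite pmulr_lgt0 // invr_gt0 hapos.
    by have /andP[hmU hcm] := hFb _ _ hF; split => //; apply: hFe.
  case: (eqVneq m t) hp => [-> _|_]; last by rewrite nR0 ltxx.
  split; [done|exact: subm_refl|by move=> h; rewrite h in hlt].
have hsR : forall t m, t \in Rem :\: U -> 0 < s t m -> [/\ subm m t, m \in Rem :\: U & u' m = u' t].
  move=> t m ht; rewrite /s; move: (ht); rewrite inE => /andP[/negbTE -> _].
  by case: (P1 t ht) => _ _ /(_ m).
have hs0 : forall t m, t \in Rem -> ~~ (0 < s t m) -> s t m = 0.
  by move=> t m ht h; apply/eqP; rewrite eq_le hsnn // andbT leNgt.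
have hbound : forall W, W != set0 -> upc (Rem :\: U) W -> dev c W <= 0.
  move=> W hW hWup.
  have hWU : upc Rem (W :|: U).
    apply: upcP.
      apply/subsetP => x; rewrite inE => /orP[/(upc_sub hWup)|/hUR //].
      by rewrite inE => /andP[].
    move=> x y; rewrite !inE => /orP[hxW|hxU] hy hxy.
      case hyU: (y \in U); first by rewrite orbT.
      by rewrite (upc_up hWup hxW) // inE hyU hy.
    by rewrite (upc_up hUup hxU hy hxy) orbT.
  have hne : W :|: U != set0.
    by apply/set0Pn; case/set0Pn: hW => x hx; exists x; rewrite inE hx.
  have := hmax _ hne hWU.
  have -> : dev c (W :|: U) = dev c W + dev c U.
    rewrite /dev !sumS -big_split /=; apply: eq_bigr => x _; rewrite inE.
    case hxU: (x \in U); case hxW: (x \in W); rewrite ?addr0 ?add0r //.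
    by have := upc_sub hWup hxW; rewrite inE hxU.
  by rewrite hdevU addr0.
have hcle : forall c', (forall W, W != set0 -> upc Rem W -> dev c' W <= 0) -> c <= c'.
  move=> c' h; have h1 := h _ hU0 hUup; rewrite dev_eq in h1.
  have h0 := dev_eq c U; rewrite hdevU in h0.
  have hw : 0 < wsum U by apply: (wsum_gt0 hT hU0); case/andP: hUup.
  rewrite -subr_ge0; have : 0 <= (c' - c) * wsum U by lra.
  by rewrite pmulr_lge0.
exists u, s; split.
- move=> t ht; split.
  + by move=> m; apply: hsnn.
  + rewrite /s; case htU: (t \in U).
      case hlt: (p t < c).
        by rewrite -mulr_suml hFrow mulfV // gt_eqF // hapos.
      by rewrite (bigD1 t) //= eqxx big1 ?addr0 // => m /negbTE ->.
    have ht' : t \in Rem :\: U by rewrite inE htU ht.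
    by case: (P1 t ht') => _ h _.
  + move=> m hp; case/orP: (hRem t ht) => htR.
      have [hmU hmt _] := hsU t m htR hp.
      by split => //; [apply: hUR|rewrite /u hmU htR].
    have [hmt hmR heq] := hsR t m htR hp.
    move: (hmR) (htR); rewrite !inE => /andP[hmU hm] /andP[htU _].
    by rewrite /u (negbTE hmU) (negbTE htU).
- move=> x t hx ht hxt; rewrite /u.
  case hxU: (x \in U).
    by rewrite (upc_up hUup hxU ht hxt).
  have hx' : x \in Rem :\: U by rewrite inE hxU hx.
  case htU: (t \in U); first by apply: P6 hx'.
  by apply: P2 => //; rewrite inE htU.
- move=> m hm; rewrite (sum_split Rem U).
  case hmU: (m \in U).
    have -> : \sum_(t in Rem :\: U) q t * s t m * (p t - u m) = 0.
      apply: big1 => t ht; rewrite hs0 ?mulr0 ?mul0r //; first by move: ht; rewrite inE => /andP[].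
      by apply/negP => /(hsR t m ht) [_]; rewrite inE hmU.
    rewrite addr0 /u hmU.
    have -> : Rem :&: U = U by apply/setIidPr; apply/subsetP => x /hUR.
    have -> : \sum_(t in U) q t * s t m * (p t - c) =
              \sum_(t in U) ((t == m)%:R * b m - F t m).
      apply: eq_bigr => t htU; rewrite /s htU.
      case: ifP => hlt.
        have hbt0 : b t = 0 by rewrite /b htU /= ltNge ltW.
        have -> : (t == m)%:R * b m = 0.
          by case: eqP => [<-|_]; rewrite ?hbt0 ?mulr0 ?nR0 ?mul0r.
        have := hapos t htU hlt; rewrite /a htU hlt /= => hap.
        rewrite sub0r; field.
        apply/andP; split; first by rewrite subr_eq0 (gt_eqF hlt).
        by rewrite gt_eqF // inT_q // hUT.
      have ha0 : a t = 0 by rewrite /a hlt andbF.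
      rewrite (hFa t m ha0) subr0.
      case: (eqVneq t m) => [e'|hne]; last by rewrite ?nR0 ?mulr0 ?mul0r.
      subst t.
      rewrite ?eqxx ?nR1 mulr1 mul1r /b hmU.
      case: ifP => hcm /=; first by [].
      have -> : p m = c.
        by apply/eqP; rewrite eq_le; move/negbT: hlt; move/negbT: hcm; rewrite -!leNgt => -> ->.
      by rewrite subrr mulr0.
    rewrite sumrB.
    have -> : \sum_(t in U) (t == m)%:R * b m = b m by rewrite sum_ind hmU mul1r.
    have -> : \sum_(t in U) F t m = \sum_t F t m.
      rewrite sumS; apply: eq_bigr => t _; case: ifP => // htU.
      by rewrite hFa // /a htU.
    by rewrite hFcol subrr.
  have -> : \sum_(t in Rem :&: U) q t * s t m * (p t - u m) = 0.
    apply: big1 => t; rewrite inE => /andP[ht htU]; rewrite hs0 ?mulr0 ?mul0r //.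
    by apply/negP => /(hsU t m htU) [h _ _]; rewrite h in hmU.
  rewrite add0r /u hmU /=.
  have hm' : m \in Rem :\: U by rewrite inE hmU hm.
  apply: eq_trans (P3 m hm'); apply: eq_bigr => t; rewrite inE => /andP[htU _].
  by rewrite /s (negbTE htU).
- move=> t ht; rewrite /u /s; case: ifP => htU.
    by move=> hlt; rewrite ltNge (ltW hlt) /= eqxx.
  by apply: P4; rewrite inE htU.
- split.
  + move=> t ht hlt t' ht'; apply: hs0 => //; apply/negP => hp.
    case/orP: (hRem t' ht') => ht'R.
      have [htU _ himp] := hsU t' t ht'R hp.
      move: hlt; rewrite /u htU => hlt.
      case hlt': (p t' < c).
        by have := himp hlt'; rewrite ltNge (ltW hlt).
      move: hp; rewrite /s ht'R hlt'.
      case: (eqVneq t t') => [e'|hne]; last by rewrite nR0 ltxx.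
      by move: hlt'; rewrite -e' hlt.
    have [_ htR _] := hsR t' t ht'R hp.
    move: (htR); rewrite inE => /andP[htU _].
    move: hlt; rewrite /u (negbTE htU) => hlt.
    have h0 := P5 t htR hlt t' ht'R.
    move: hp; rewrite /s; move: (ht'R); rewrite inE => /andP[/negbTE -> _].
    by rewrite h0 ltxx.
  + move=> c' hc' t ht; rewrite /u; case: ifP => htU; first exact: hcle.
    apply: le_trans (hcle c' hc'); apply: P6 => //.
    by rewrite inE htU.
Qed.

Lemma build n : forall Rem, (#|Rem| <= n)%N -> (forall t, t \in Rem -> inT t) ->
  exists u s, Props Rem u s.
Proof.
elim: n => [|n IH] Rem hn hT.
  move: hn; rewrite leqn0 => /eqP /cards0_eq ->.
  by exists (fun _ => 0), (fun _ _ => 0); apply: props_nil.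
case: (eqVneq Rem set0) => [->|hR0].
  by exists (fun _ => 0), (fun _ _ => 0); apply: props_nil.
pose P := fun W => (W != set0) && upc Rem W.
have hP : P Rem.
  by rewrite /P hR0 /=; apply: upcP => //.
case: (arg_maxP avg hP) => U /andP[hU0 hUup] hmax.
have hw : forall W, W != set0 -> upc Rem W -> 0 < wsum W.
  by move=> W hW hup; apply: (wsum_gt0 hT hW); case/andP: hup.
have hdevU : dev (avg U) U = 0.
  by rewrite dev_eq /avg mulfVK ?subrr // gt_eqF // hw.
have hmax' : forall W, W != set0 -> upc Rem W -> dev (avg U) W <= 0.
  move=> W hW hup; have := hmax W; rewrite /P hW hup => /(_ isT) hle.
  rewrite dev_eq subr_le0.
  have hwW := hw W hW hup.
  have -> : psum W = avg W * wsum W by rewrite /avg mulfVK // gt_eqF.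
  by rewrite ler_wpM2r // ltW.
have hlt : (#|Rem :\: U| < #|Rem|)%N.
  apply: proper_card; apply/properP; split; first exact: subsetDl.
  case/set0Pn: hU0 => x hx; exists x; first exact: upc_sub hUup hx.
  by rewrite inE hx.
have hT' : forall t, t \in Rem :\: U -> inT t.
  by move=> t; rewrite inE => /andP[_ /hT].
have hn' : (#|Rem :\: U| <= n)%N by rewrite -ltnS; apply: leq_trans hlt hn.
have [u' [s' hprops]] := IH (Rem :\: U) hn' hT'.
exact: build_step hT hU0 hUup hdevU hmax' hprops.
Qed.

Lemma strat_exists s t : is_strategy b0 f g s -> inT t -> exists m, 0 < s t m.
Proof.
move=> hs ht; case: (hs t ht) => hnn hsum _.
case: (boolP [exists x, 0 < s t x]) => [/existsP //|/existsPn hno].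
have : \sum_m s t m <= 0 by apply: sumr_le0 => m _; rewrite leNgt hno.
by rewrite hsum ler10.
Qed.

Lemma onpath_sender s m : (forall t, inT t -> 0 <= s t m) -> onpath s m ->
  exists t, inT t /\ 0 < s t m.
Proof.
move=> hnn hon.
case: (boolP [exists t, inT t && (0 < s t m)]) => [/existsP [t /andP[h1 h2]]|/existsPn hno].
  by exists t.
move: hon; rewrite /Defs.onpath /Defs.mass big1 ?ltxx // => t ht.
have := hnn t ht; rewrite le_eqVlt => /orP[/eqP <-|h]; first by rewrite mulr0.
by have := hno t; rewrite ht h.
Qed.

Lemma exist_abc : exists s, abc_equilibrium theta b0 f g s.
Proof.
pose Rem : {set Msg} := [set t | inT t].
have hRT : forall t, t \in Rem -> inT t by move=> t; rewrite inE.
have [u [s [P1 P2 P3 P4 [P5 P6]]]] := build (leqnn #|Rem|) hRT.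
have hTR : forall t, inT t -> t \in Rem by move=> t; rewrite inE.
have P1' : forall t, inT t -> [/\ forall m, 0 <= s t m, \sum_m s t m = 1 &
        forall m, 0 < s t m -> [/\ subm m t, inT m & u m = u t]].
  move=> t ht; have [h1 h2 h3] := P1 t (hTR t ht).
  by split => // m /h3 [? /hRT ?].
have hstrat : is_strategy b0 f g s.
  by move=> t ht; case: (P1' t ht) => h1 h2 h3; split => // m /h3 [].
have hnn : forall m t, inT t -> 0 <= s t m by move=> m t /P1' [].
have hvon : forall m, inT m -> onpath s m -> v s m = u m.
  move=> m hm hon; rewrite (v_on hon).
  have := P3 m (hTR m hm).
  rewrite (eq_bigl (fun t => inT t)); last by move=> t; rewrite inE.
  under eq_bigr do rewrite mulrBr.
  rewrite sumrB -mulr_suml -/(num s m) -/(Defs.mass b0 f g s m) => /eqP.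
  rewrite subr_eq0 => /eqP ->.
  by rewrite mulrC mulKf // gt_eqF.
have hvle : forall m, inT m -> v s m <= u m.
  move=> m hm; case hon: (onpath s m); first by rewrite hvon.
  rewrite (v_off (negbT hon) hm) leNgt; apply/negP => hlt.
  have h2 := P4 m (hTR m hm) hlt.
  have hon' : onpath s m.
    by apply: (onpath_of hm (fun t' ht' => hnn m t' ht')); rewrite h2 ltr01.
  by rewrite hon' in hon.
have hsupT : forall t m, inT t -> 0 < s t m -> inT m.
  by move=> t m ht hp; case: (P1' t ht) => _ _ /(_ m hp) [].
have hbound : forall t m', inT t -> subm m' t -> v s m' <= u t.
  move=> t m' ht hsub.
  case hm': (inT m').
    by apply: le_trans (hvle m' hm') _; apply: P2 => //; apply: hTR.
  have hoff : ~~ onpath s m'.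
    apply/negP => hon; have [t' [ht' hp]] := onpath_sender (fun t ht => hnn m' t ht) hon.
    by move: hm'; rewrite (hsupT t' m' ht' hp).
  apply: le_trans (v_cand hoff (negbT hm') ht hsub) _.
  exact: hvle.
have hsend : forall t m, inT t -> 0 < s t m -> v s m = u t.
  move=> t m ht hp; case: (P1' t ht) => _ _ /(_ m hp) [_ hm heq].
  rewrite -heq; apply: hvon => //.
  exact: onpath_of ht (fun t' ht' => hnn m t' ht') hp.
have hustar : forall t, inT t -> ustar s t = u t.
  move=> t ht; apply/eqP; rewrite eq_le; apply/andP; split.
    by apply: ustar_le => m' hm'; apply: hbound.
  have [m hp] := strat_exists hstrat ht.
  rewrite -(hsend t m ht hp); apply: ustar_ge.
  by case: (hstrat t ht) => _ _ /(_ m hp).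
exists s; split => //.
- move=> t ht m hp m' hsub.
  rewrite -/(act_sig theta b0 f g s m') -/(act_sig theta b0 f g s m).
  by rewrite (hsend t m ht hp); apply: hbound.
- move=> m hon; have [t [ht hp]] := onpath_sender (fun t ht => hnn m t ht) hon.
  exact: hsupT ht hp.
- move=> t ht; rewrite hustar // => hlt.
  rewrite /Defs.onpath /Defs.mass big1 ?ltxx // => t' ht'.
  by rewrite (P5 t (hTR t ht) hlt t' (hTR t' ht')) mulr0.
- move=> t ht; rewrite hustar // => hlt.
  exact: P4 (hTR t ht) hlt.
Qed.
End Basics.

Unset Implicit Arguments.
Set Strict Implicit.

Theorem lemma1 (R : realFieldType) (J D N : nat)
  (theta b0 : 'I_J -> R) (f : 'I_J -> 'I_D -> R) (g : nat -> R)
  (hN : (0 < N)%N)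
  (htheta : forall i j : 'I_J, (i <= j)%N -> theta i <= theta j)
  (hb0 : (forall j, 0 <= b0 j) /\ \sum_(j < J) b0 j = 1)
  (hf : forall j, (forall d, 0 <= f j d) /\ \sum_(d < D) f j d = 1)
  (hg : [/\ forall n, 0 <= g n, forall n, (N < n)%N -> g n = 0,
            \sum_(n < N.+1) g n = 1 & 0 < g N]) :
  (* every truth-leaning equilibrium strategy is a best response to q_sigma and satisfies (a)-(c) *)
  (forall s : Msg D N -> Msg D N -> R,
     truth_leaning theta b0 f g s ->
     [/\ best_response_to theta b0 f g (qsig theta b0 f g s) s,
         prop_a b0 f g s, prop_b theta b0 f g s & prop_c theta b0 f g s])
  (* existence of an equilibrium with (a)-(c) *)
  /\ (exists s : Msg D N -> Msg D N -> R, abc_equilibrium theta b0 f g s)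
  (* all such equilibria have the same outcome *)
  /\ (forall s1 s2 : Msg D N -> Msg D N -> R,
        abc_equilibrium theta b0 f g s1 -> abc_equilibrium theta b0 f g s2 ->
        forall t, inT b0 f g t -> ustar theta b0 f g s1 t = ustar theta b0 f g s2 t)
  (* which coincides with the truth-leaning equilibrium outcome *)
  /\ (forall s s' : Msg D N -> Msg D N -> R,
        abc_equilibrium theta b0 f g s -> truth_leaning theta b0 f g s' ->
        forall t, inT b0 f g t -> ustar theta b0 f g s t = ustar theta b0 f g s' t).
Proof.
have hb0' : forall j, 0 <= b0 j by case: hb0.
have hf' : forall j d, 0 <= f j d by move=> j d; case: (hf j) => h _; apply: h.
have hg' : forall n, 0 <= g n by case: hg.
split; [|split; [|split]].
- move=> s hs; have [_ h1 h2 h3 h4] := TL_abc hb0' hf' hg' hs; by split.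
- exact: exist_abc hb0' hf' hg'.
- move=> s1 s2 h1 h2 t ht; exact: (uniq_outcome hb0' hf' hg' h1 h2 ht).
- move=> s s' h1 h2 t ht.
  exact: (uniq_outcome hb0' hf' hg' h1 (TL_abc hb0' hf' hg' h2) ht).
Qed.
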